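(* Under the setting and quadratic assumption described in the context, the replacement of an agent, denoted $R$, results in $$\mathbb{E}\left[\Delta f_t \mid R\right] \leq \frac{3n^2-3n+1}{2n^2}\left(\beta-\alpha\right).$$
   Context: A fixed set of $n$ agents on a complete graph solves $\min_{x\in S_n} f^t(x)=\sum_{i=1}^n f_i^t(x_i)$, where $S_n=\{x\in\mathbb{R}_{\ge 0}^n : \mathds{1}^\top x = n\}$ (every agent has demand $d_i^t=1$). Each local cost $f_i^t:\mathbb{R}_{\ge0}\to\mathbb{R}_{\ge0}$ is one-dimensional, continuously differentiable, $\alpha$-strongly convex, $\beta$-smooth, with $\arg\min_{x\ge 0} f_i^t(x)=0$ and $f_i^t(0)=0$; moreover every local cost (including that of any joining agent) is quadratic, $f_i(x_i)=\phi_i x_i^2$ with $\phi_i\in[\alpha/2,\beta/2]$. The estimates $x^t\in S_n$ evolve by events: either an update (a pairwise Random Coordinate Descent step between agents $i,j$: $x_i^+=x_i-\frac1\beta(f_i'(x_i)-f_j'(x_j))$, $x_j^+=x_j-\frac1\beta(f_j'(x_j)-f_i'(x_i))$) or a replacement $R$, i.e. simultaneous departure and arrival. At a departure, a leaving agent $\ell$ chosen uniformly among the $n$ agents sends its estimate $x_\ell$ to all others, which update $x_i^+=(1-\frac1n)x_i+\frac1n x_\ell$; at an arrival, the joining agent initializes its estimate to $1$. Here $\Delta f_t := f^{t+1}(x^{t+1})-f^t(x^t)$ is the one-step variation of the total cost evaluated at the estimates. *)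

(* Defs.v *)
From mathcomp Require Import all_boot all_order all_algebra.
Set Implicit Arguments. Unset Strict Implicit. Unset Printing Implicit Defensive.
Import Order.TTheory GRing.Theory Num.Theory.
Local Open Scope ring_scope.

(* Total cost sum_i phi_i x_i^2 of quadratic local costs f_i(x) = phi_i x^2. *)
Definition total_cost (R : realFieldType) (n : nat) (phi x : 'I_n -> R) : R :=
  \sum_(i < n) phi i * x i ^+ 2.

Definition in_simplex (R : realFieldType) (n : nat) (x : 'I_n -> R) : Prop :=
  (forall i, 0 <= x i) /\ \sum_(i < n) x i = n%:R.

(* Estimates after replacement R where agent l leaves (its slot is taken by the
   joining agent, initialized to 1); the others do x_i <- (1-1/n) x_i + x_l / n. *)
Definition replace_est (R : realFieldType) (n : nat) (x : 'I_n -> R) (l : 'I_n)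
  : 'I_n -> R :=
  fun i => if i == l then 1 else (1 - n%:R^-1) * x i + n%:R^-1 * x l.

Definition replace_coef (R : realFieldType) (n : nat) (phi psi : 'I_n -> R)
  (l : 'I_n) : 'I_n -> R :=
  fun i => if i == l then psi l else phi i.

(* E[Delta f_t | R], the leaving agent l being uniform among the n agents. *)
Definition expected_delta_replace (R : realFieldType) (n : nat)
  (phi psi x : 'I_n -> R) : R :=
  n%:R^-1 * \sum_(l < n)
    (total_cost (replace_coef phi psi l) (replace_est x l) - total_cost phi x).

(* Main.v *)
Require Import Defs.
From mathcomp Require Import all_boot all_order all_algebra.
From mathcomp Require Import ring lra.
Import Order.TTheory GRing.Theory Num.Theory.
Local Open Scope ring_scope.

Lemma tc_replace (R : realFieldType) (n : nat) (phi psi x : 'I_n -> R) (l : 'I_n) :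
  total_cost (replace_coef phi psi l) (replace_est x l) =
  psi l + \sum_(i < n) phi i * (if i == l then 0 else
        ((1 - n%:R^-1) * x i + n%:R^-1 * x l) ^+ 2).
Proof.
rewrite /total_cost (bigD1 l) //= [X in _ = _ + X](bigD1 l) //=.
rewrite /replace_coef /replace_est !eqxx expr1n mulr1 mulr0 add0r; congr (_ + _).
by apply: eq_bigr => i /negPf ->.
Qed.

Lemma key (R : realFieldType) (al be p C g : R) :
  al <= be -> al / 2 <= p <= be / 2 -> C <= g -> 0 <= g ->
  p * C <= al / 2 * C + (be - al) / 2 * g.
Proof.
move=> hab /andP[h1 h2] hCg hg.
case: (lerP 0 C) => hC.
- have : p * C <= be / 2 * C by rewrite ler_wpM2r.
  nra.
- have : p * C <= al / 2 * C by rewrite ler_wnM2r // ltW.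
  nra.
Qed.
Lemma sum_quad (R : realFieldType) (n : nat) (x : 'I_n -> R) (c1 c2 c3 : R) :
  \sum_(i < n) (c1 * x i ^+ 2 + c2 * x i + c3) =
  c1 * \sum_(i < n) x i ^+ 2 + c2 * \sum_(i < n) x i + c3 * n%:R.
Proof.
rewrite !big_split /= sumr_const card_ord -!mulr_sumr; by rewrite mulr_natr.
Qed.

Lemma test (R : realFieldType) (n : nat) (x : 'I_n -> R) (a : R) (i : 'I_n):
  \sum_(l < n) ((1 - a) * x i + a * x l) ^+ 2 =
  (1-a)^+2 * x i ^+2 * n%:R + 2 * (1 - a) * a * x i * \sum_(l < n) x l + a ^+ 2 * \sum_(l < n) x l ^+ 2.
Proof.
rewrite (eq_bigr (fun l => a^+2 * x l ^+ 2 + (2 * (1 - a) * a * x i) * x l + (1-a)^+2 * x i ^+2)).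
  by rewrite sum_quad; ring.
by move=> l _; ring.
Qed.

Theorem proposition3 (R : realFieldType) (n : nat) (alpha beta : R)
  (phi psi x : 'I_n -> R) :
  (0 < n)%N -> 0 < alpha -> alpha <= beta ->
  (forall i, alpha / 2 <= phi i <= beta / 2) ->
  (forall l, alpha / 2 <= psi l <= beta / 2) ->
  in_simplex x ->
  expected_delta_replace phi psi x
    <= (3 * n%:R ^+ 2 - 3 * n%:R + 1) / (2 * n%:R ^+ 2) * (beta - alpha).
Proof.
move=> n0 al0 hab hphi hpsi [xge Sx].
set N := n%:R.
have hN1 : 1 <= N by rewrite /N ler1n.
have hN : 0 < N by lra.
have hN0 : N != 0 by rewrite gt_eqF.
set a := N^-1.
have aN : a * N = 1 by rewrite mulVf.
have a0 : 0 < a by rewrite invr_gt0.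
have a1 : a <= 1 by rewrite invr_le1 // unitf_gt0.
set Q := \sum_(i < n) x i ^+ 2.
have hQ : N <= Q.
  have : 0 <= \sum_(i < n) (x i - 1) ^+ 2 by apply: sumr_ge0 => i _; exact: sqr_ge0.
  rewrite (eq_bigr (fun i => 1 * x i ^+ 2 + (-2) * x i + 1)); last by move=> i _; ring.
  rewrite sum_quad Sx -/Q; lra.
have hxle i : x i <= N.
  rewrite /N -Sx (bigD1 i) //= lerDl; apply: sumr_ge0 => j _; exact: xge.
have hxQ i : x i ^+ 2 <= Q.
  rewrite /Q (bigD1 i) //= lerDl; apply: sumr_ge0 => j _; exact: sqr_ge0.
pose C i := \sum_(l < n) ((1 - a) * x i + a * x l) ^+ 2 - x i ^+ 2 - N * x i ^+ 2.
pose g i := a ^+ 2 * Q + 2 * (1 - a) * x i - (2 * N - 1) * a ^+ 2 * x i ^+ 2.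
have hCe i : C i = ((1-a)^+2 * N - 1 - N) * x i ^+ 2 + (2 * (1 - a) * a * N) * x i + a ^+ 2 * Q.
  rewrite /C test Sx -/Q -/N; ring.
have hsum : \sum_(l < n) (total_cost (replace_coef phi psi l) (replace_est x l) - total_cost phi x)
   = \sum_(l < n) psi l + \sum_(i < n) phi i * C i.
  under eq_bigr do rewrite tc_replace.
  rewrite sumrB big_split /= sumr_const card_ord -addrA; congr (_ + _).
  rewrite exchange_big /= /total_cost.
  rewrite -/N -/a -[X in _ - X]mulr_natr -/N mulr_suml -sumrB; apply: eq_bigr => i _.
  rewrite -mulr_sumr /C (bigD1 i) //= eqxx [X in _ = _ * (X - _ - _)](bigD1 i) //=.
  have -> : ((1 - a) * x i + a * x i) ^+ 2 = x i ^+ 2 by ring.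
  rewrite add0r (eq_bigr (fun l => ((1 - a) * x i + a * x l) ^+ 2)); last first.
    by move=> l /negPf; rewrite eq_sym => ->.
  ring.
have hgC i : g i - C i = x i ^+ 2 * (3 - 3 * a + a ^+ 2).
  rewrite hCe /g /a; field; exact: hN0.
have hCg i : C i <= g i.
  have := hgC i; have := sqr_ge0 (x i); nra.
have hg0 i : 0 <= g i.
  have e : g i = a ^+ 2 * (Q - x i ^+ 2) + 2 * (1 - a) * x i * (1 - a * x i).
    rewrite /g /a; field; exact: hN0.
  have hax : a * x i <= 1.
    by rewrite -aN ler_pM2l.
  rewrite e; apply: addr_ge0.
    apply: mulr_ge0; [exact: sqr_ge0 | rewrite subr_ge0; exact: hxQ].
  apply: mulr_ge0; last by rewrite subr_ge0.
  apply: mulr_ge0; [lra | exact: xge].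
pose d := beta - alpha.
have hpsiS : \sum_(l < n) psi l <= N * (beta / 2).
  have : \sum_(l < n) psi l <= \sum_(l < n) (beta / 2).
    by apply: ler_sum => l _; case/andP: (hpsi l).
  by rewrite sumr_const card_ord -(mulr_natl (beta / 2) n).
have hphiS : \sum_(i < n) phi i * C i <= \sum_(i < n) (alpha / 2 * C i + d / 2 * g i).
  by apply: ler_sum => i _; apply: key.
have hS : \sum_(i < n) (alpha / 2 * C i + d / 2 * g i) =
   alpha / 2 * (((1-a)^+2 * N - 1 - N) * Q + (2 * (1 - a) * a * N) * N + a ^+ 2 * Q * N)
   + d / 2 * ((- (2 * N - 1) * a ^+ 2) * Q + 2 * (1 - a) * N + a ^+ 2 * Q * N).
  rewrite (eq_bigr (fun i => (alpha / 2 * ((1-a)^+2 * N - 1 - N) + d / 2 * (- (2 * N - 1) * a ^+ 2)) * x i ^+ 2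
     + (alpha / 2 * (2 * (1 - a) * a * N) + d / 2 * (2 * (1 - a))) * x i
     + (alpha / 2 * (a ^+ 2 * Q) + d / 2 * (a ^+ 2 * Q)))).
    by rewrite sum_quad -/Q Sx -/N; ring.
  by move=> i _; rewrite hCe /g; ring.
rewrite /expected_delta_replace -/N -/a hsum.
have step : a * (\sum_(l < n) psi l + \sum_(i < n) phi i * C i) <=
   a * (N * (beta / 2) + (alpha / 2 * (((1-a)^+2 * N - 1 - N) * Q + (2 * (1 - a) * a * N) * N + a ^+ 2 * Q * N)
   + d / 2 * ((- (2 * N - 1) * a ^+ 2) * Q + 2 * (1 - a) * N + a ^+ 2 * Q * N))).
  rewrite ler_pM2l // -hS; exact: lerD.
apply: (le_trans step).
have fin : a * (N * (beta / 2) + (alpha / 2 * (((1-a)^+2 * N - 1 - N) * Q + (2 * (1 - a) * a * N) * N + a ^+ 2 * Q * N)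
   + d / 2 * ((- (2 * N - 1) * a ^+ 2) * Q + 2 * (1 - a) * N + a ^+ 2 * Q * N)))
   - (3 * N ^+ 2 - 3 * N + 1) / (2 * N ^+ 2) * (beta - alpha)
   = (Q - N) * (a * (alpha / 2 * (2 * a - 3) - d / 2 * (N - 1) * a ^+ 2)).
  rewrite /d /a; field; exact: hN0.
rewrite -subr_le0 fin.
have hd : 0 <= d by rewrite /d subr_ge0.
have hk : a * (alpha / 2 * (2 * a - 3) - d / 2 * (N - 1) * a ^+ 2) <= 0.
  have h1 : alpha / 2 * (2 * a - 3) <= 0 by nra.
  have h2 : 0 <= d / 2 * (N - 1) * a ^+ 2.
    apply: mulr_ge0; last exact: sqr_ge0.
    apply: mulr_ge0; lra.
  nra.
nra.
Qed.
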